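(* For all integers $k,l\ge1$, $sat^*([k]\times[l],\vee_2)=La^*([k]\times[l],\vee_2)=k+l-1$.
   Context: $[k]\times[l]$ is ordered coordinatewise. $\vee_2$ is the poset on three elements $a,b_1,b_2$ whose only relations are $a<b_1,a<b_2$. For posets $P,R$, $P$ is a strong subposet of $R$ if there is an injection $i:P\to R$ with $p\le_P p'\iff i(p)\le_R i(p')$. A subset $F\subseteq Q$ is strong $P$-free if $P$ is not a strong subposet of $F$; it is strong $P$-saturated if it is strong $P$-free and for every $x\in Q\setminus F$, $P$ is a strong subposet of $F\cup\{x\}$. $La^*(Q,P)$ is the maximum size of a strong $P$-free subset of $Q$ and $sat^*(Q,P)$ the minimum size of a strong $P$-saturated subset of $Q$. *)

(* Defs.v *)
From mathcomp Require Import all_boot.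
Set Implicit Arguments. Unset Strict Implicit. Unset Printing Implicit Defensive.

Definition strong_sub (P Q : finType) (leP : rel P) (leQ : rel Q)
    (F : {set Q}) : bool :=
  [exists i : {ffun P -> Q},
    [&& injectiveb i, [forall p, i p \in F]
      & [forall p, forall p', leP p p' == leQ (i p) (i p')]]].

Definition strong_free (P Q : finType) (leP : rel P) (leQ : rel Q)
    (F : {set Q}) : bool := ~~ strong_sub leP leQ F.

Definition strong_saturated (P Q : finType) (leP : rel P) (leQ : rel Q)
    (F : {set Q}) : bool :=
  strong_free leP leQ F &&
  [forall x, (x \notin F) ==> strong_sub leP leQ (x |: F)].

Definition La_star (P Q : finType) (leP : rel P) (leQ : rel Q) : nat :=
  \max_(F : {set Q} | strong_free leP leQ F) #|F|.

(* sat^*(Q,P): minimum size of a strong P-saturated subset of Q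
   (the default value #|Q| is irrelevant: saturated sets always exist and
   have size at most #|Q|). *)
Definition sat_star (P Q : finType) (leP : rel P) (leQ : rel Q) : nat :=
  \big[minn/#|Q|]_(F : {set Q} | strong_saturated leP leQ F) #|F|.

(* The grid [k] x [l], with [k] = {0,...,k-1} (order-isomorphic to {1..k}),
   ordered coordinatewise. *)
Definition grid_le (k l : nat) : rel ('I_k * 'I_l) :=
  fun x y => (x.1 <= y.1) && (x.2 <= y.2).

(* The poset V_2 on 'I_3: element 0 is a, elements 1 and 2 are b_1, b_2;
   the only strict relations are a < b_1 and a < b_2. *)
Definition vee2_le : rel 'I_3 :=
  fun x y => (x == y) || (val x == 0).

(* Main.v *)
Require Import Defs.
From mathcomp Require Import all_boot.
From mathcomp Require Import zify.
Set Implicit Arguments. Unset Strict Implicit. Unset Printing Implicit Defensive.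

Section G.
Variables k l : nat.
Local Notation T := ('I_k * 'I_l)%type.
Local Notation le := (@grid_le k l).

Definition okF (F : {set T}) := forall a b c, a \in F -> b \in F -> c \in F ->
  le a b -> le a c -> le b c \/ le c b.

Lemma le_refl x : le x x.
Proof. by rewrite /grid_le !leqnn. Qed.

Lemma le_trans x y z : le x y -> le y z -> le x z.
Proof. rewrite /grid_le => /andP[h1 h2] /andP[h3 h4]; apply/andP; split; lia. Qed.

Lemma ok_of_free F : strong_free vee2_le le F -> okF F.
Proof.
move=> hf a b c aF bF cF hab hac.
case hbc: (le b c); first by left. case hcb: (le c b); first by right.
exfalso; move/negP: hf; apply.
have nab : a != b by apply/eqP=> e; subst; rewrite hac in hbc.
have nac : a != c by apply/eqP => e; subst; rewrite hab in hcb.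
have nbc : b != c by apply/eqP => e; subst; rewrite le_refl in hbc.
have nba : le b a = false.
  by apply/negP => hba; move: (le_trans hba hac); rewrite hbc.
have nca : le c a = false.
  by apply/negP => hca; move: (le_trans hca hab); rewrite hcb.
apply/existsP.
exists [ffun p : 'I_3 => if val p == 0 then a else if val p == 1 then b else c].
apply/and3P; split.
- apply/injectiveP => p q; rewrite !ffunE.
  case: p q => [[|[|[|p]]] hp] [[|[|[|q]]] hq] //=;
  try (by move=> _; apply/val_inj);
  by move=> e; move: nab nac nbc; rewrite e ?eqxx.
- apply/forallP => p; rewrite ffunE.
  by case: ifP => _ //; case: ifP.
- apply/forallP => p; apply/forallP => q; rewrite !ffunE.
  case: p q => [[|[|[|p]]] hp] [[|[|[|q]]] hq] //=;
  by rewrite /vee2_le /= ?le_refl ?hab ?hac ?hbc ?hcb ?nba ?nca.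
Qed.

Lemma free_of_ok F : okF F -> strong_free vee2_le le F.
Proof.
move=> hok; apply/negP => /existsP [i /and3P [_ /forallP hin /forallP hrel]].
pose i1 : 'I_3 := @Ordinal 3 1 isT. pose i2 : 'I_3 := @Ordinal 3 2 isT.
have R p q : le (i p) (i q) = vee2_le p q.
  by move/forallP: (hrel p) => /(_ q) /eqP <-.
have := hok (i ord0) (i i1) (i i2) (hin _) (hin _) (hin _).
by rewrite !R /vee2_le /=; case=> //; case.
Qed.

Lemma pair_eq (x y : T) : x.1 = y.1 :> nat -> x.2 = y.2 :> nat -> x = y.
Proof. by case: x y => [x1 x2] [y1 y2] /= /val_inj -> /val_inj ->. Qed.

Definition HiP (F : {set T}) := [set x : T | [forall y in F, (y.1 == x.1 :> nat) ==> (y.2 <= x.2)]].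

Lemma NHP (F : {set T}) (x : T) : x \in F :\: HiP F ->
  x \in F /\ exists2 w : T, w \in F & (w.1 == x.1 :> nat) && (x.2 < w.2).
Proof.
rewrite inE => /andP[]; rewrite inE => /forallPn [w]; rewrite negb_imply => /andP[wF].
rewrite negb_imply -ltnNge => h xF; split => //; exists w => //.
Qed.

Lemma NHP2 (F : {set T}) (x w : T) : x \in F -> w \in F -> w.1 = x.1 :> nat -> x.2 < w.2 -> x \in F :\: HiP F.
Proof.
move=> xF wF e lt; rewrite inE xF andbT inE; apply/forallPn; exists w.
by rewrite wF /= e eqxx /= -ltnNge.
Qed.

Lemma HiE (F : {set T}) (x : T) : x \in F :&: HiP F -> x \in F /\ forall y, y \in F -> y.1 = x.1 :> nat -> y.2 <= x.2.
Proof.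
rewrite inE => /andP[xF]; rewrite inE => /forallP h; split => // y yF e.
by move: (h y); rewrite yF e eqxx.
Qed.

Lemma HiE2 (F : {set T}) (x : T) : x \in F -> (forall y, y \in F -> y.1 = x.1 :> nat -> y.2 <= x.2) -> x \in F :&: HiP F.
Proof.
move=> xF h; rewrite inE xF inE; apply/forallP => y; apply/implyP => yF; apply/implyP => /eqP e.
exact: h.
Qed.

Lemma ub (F : {set T}) (j0 : 'I_l) (hj0 : forall j : 'I_l, j <= j0) : okF F -> #|F| <= k + l.-1.
Proof.
move=> hok; rewrite -(cardsID (HiP F) F).
apply: leq_add.
- rewrite -(card_in_imset (f := fst)).
    by apply: leq_trans (max_card _) _; rewrite card_ord.
  move=> x y /HiE [xF hx] /HiE [yF hy] e.
  apply: pair_eq; first by rewrite e.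
  have := hx y yF (esym (congr1 val e)). have := hy x xF (congr1 val e). by move=> h1 h2; apply/eqP; rewrite eqn_leq h1 h2.
- have inj : {in F :\: HiP F &, injective snd}.
    have side (x y : T) : x \in F :\: HiP F -> y \in F -> x.2 = y.2 :> nat -> x.1 < y.1 -> False.
      move=> /NHP [xF [w wF /andP[/eqP e1 e2]]] yF e3 lt.
      have h1 : le x w by rewrite /grid_le; apply/andP; split; lia.
      have h2 : le x y by rewrite /grid_le; apply/andP; split; lia.
      case: (hok _ _ _ xF wF yF h1 h2); rewrite /grid_le; lia.
    move=> x y xN yN e; apply: pair_eq; last by rewrite e.
    have yF : y \in F by move: yN; rewrite inE => /andP[].
    have xF : x \in F by move: xN; rewrite inE => /andP[].
    case: (ltngtP x.1 y.1) => // lt.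
    + by case: (side x y xN yF (congr1 val e) lt).
    + by case: (side y x yN xF (esym (congr1 val e)) lt).
  rewrite -(card_in_imset inj).
  have -> : l.-1 = #|[set~ j0]| by rewrite cardsC1 card_ord.
  apply: subset_leq_card; apply/subsetP => j /imsetP [x /NHP [xF [w wF /andP[/eqP e1 e2]]] ->].
  rewrite !inE; apply/eqP => e; move: (hj0 w.2); by rewrite -e leqNgt e2.
Qed.

Lemma add_ok (F : {set T}) (x : T) : okF F ->
  (forall q s, q \in F -> s \in F -> le x q -> le x s -> le q s \/ le s q) ->
  (forall p s, p \in F -> s \in F -> le p x -> le p s -> le x s \/ le s x) ->
  okF (x |: F).
Proof.
move=> hok h1 h2 a b c; rewrite !in_setU1.
case/orP=> [/eqP->|aF]; case/orP=> [/eqP->|bF]; case/orP=> [/eqP->|cF] => hab hac.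
all: first [ by left; apply: le_refl | by left | by right | by apply: h1
  | by apply: (h2 _ _ aF cF) | by case: (h2 _ _ aF bF hac hab) => H; [right|left] | exact: (hok a b c) ].
Qed.

Ltac gl := unfold grid_le in *; simpl in *; try (match goal with x := _ |- _ => subst x end); simpl in *; lia.

Lemma colA (F : {set T}) (j0 : 'I_l) (hj0 : forall j : 'I_l, j <= j0)
  (hok : okF F) (hsat : forall x, x \notin F -> ~ okF (x |: F)) (a : 'I_k) :
  exists2 y : T, y \in F & y.1 = a :> nat.
Proof.
case: (boolP [exists y in F, (y.1 == a :> nat)]) => [/existsP [y /andP[yF /eqP e]]|hno].
  by exists y.
have hcol : forall y : T, y \in F -> y.1 <> a :> nat.
  move=> y yF e; move/existsP: hno; apply; exists y; by rewrite yF e eqxx.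
pose S := [set z in F | (a < z.1) && [exists y in F, (y.1 < a) && le y z]].
case: (set_0Vmem S) => [S0 | [z0 z0S]].
- pose x : T := (a, j0).
  have xF : x \notin F by apply/negP => /hcol; apply.
  apply: False_ind; apply: (hsat x xF); apply: add_ok => //.
  + move=> q s qF sF hq hs; have := hj0 q.2; have := hj0 s.2; gl.
  + move=> p s pF sF hp hs.
    move: (hcol p pF) (hcol s sF) (hj0 s.2) => h1 h2 h3.
    case: (ltnP a s.1) => h.
      have : s \in S by rewrite inE sF h /=; apply/existsP; exists p; rewrite pF hs andbT; gl.
      by rewrite S0 inE.
    gl.
- case: (@arg_minnP _ z0 (fun z : T => z \in S) (fun z : T => nat_of_ord z.2) z0S) => zs.
  rewrite inE => /andP[zsF /andP[azs /existsP [ys /andP [ysF /andP[ysa ysz]]]]] zmin.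
  pose x : T := (a, zs.2).
  have xF : x \notin F by apply/negP => /hcol; apply.
  apply: False_ind; apply: (hsat x xF); apply: add_ok => //.
  + move=> q s qF sF hq hs.
    have := hcol q qF; have := hcol s sF => h1 h2.
    apply: (hok ys) => //; gl.
  + move=> p s pF sF hp hs.
    have := hcol p pF; have := hcol s sF => h1 h2.
    have hpz : le p zs by gl.
    have := hok p zs s pF zsF sF hpz hs.
    have hm : a < s.1 -> zs.2 <= s.2.
      move=> h; apply: zmin; rewrite inE sF h /=; apply/existsP; exists p; rewrite pF hs andbT; gl.
    gl.
Qed.

Lemma rowA (F : {set T}) (i0 : 'I_k) (hi0 : forall i : 'I_k, i <= i0)
  (hok : okF F) (hsat : forall x, x \notin F -> ~ okF (x |: F)) (a : 'I_l) :
  exists2 y : T, y \in F & y.2 = a :> nat.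
Proof.
case: (boolP [exists y in F, (y.2 == a :> nat)]) => [/existsP [y /andP[yF /eqP e]]|hno].
  by exists y.
have hcol : forall y : T, y \in F -> y.2 <> a :> nat.
  move=> y yF e; move/existsP: hno; apply; exists y; by rewrite yF e eqxx.
pose S := [set z in F | (a < z.2) && [exists y in F, (y.2 < a) && le y z]].
case: (set_0Vmem S) => [S0 | [z0 z0S]].
- pose x : T := (i0, a).
  have xF : x \notin F by apply/negP => /hcol; apply.
  apply: False_ind; apply: (hsat x xF); apply: add_ok => //.
  + move=> q s qF sF hq hs; have := hi0 q.1; have := hi0 s.1; gl.
  + move=> p s pF sF hp hs.
    move: (hcol p pF) (hcol s sF) (hi0 s.1) => h1 h2 h3.
    case: (ltnP a s.2) => h.
      have : s \in S by rewrite inE sF h /=; apply/existsP; exists p; rewrite pF hs andbT; gl.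
      by rewrite S0 inE.
    gl.
- case: (@arg_minnP _ z0 (fun z : T => z \in S) (fun z : T => nat_of_ord z.1) z0S) => zs.
  rewrite inE => /andP[zsF /andP[azs /existsP [ys /andP [ysF /andP[ysa ysz]]]]] zmin.
  pose x : T := (zs.1, a).
  have xF : x \notin F by apply/negP => /hcol; apply.
  apply: False_ind; apply: (hsat x xF); apply: add_ok => //.
  + move=> q s qF sF hq hs.
    have := hcol q qF; have := hcol s sF => h1 h2.
    apply: (hok ys) => //; gl.
  + move=> p s pF sF hp hs.
    have := hcol p pF; have := hcol s sF => h1 h2.
    have hpz : le p zs by gl.
    have := hok p zs s pF zsF sF hpz hs.
    have hm : a < s.2 -> zs.1 <= s.1.
      move=> h; apply: zmin; rewrite inE sF h /=; apply/existsP; exists p; rewrite pF hs andbT; gl.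
    gl.
Qed.

Lemma rowB (F : {set T}) (j0 : 'I_l) (hj0 : forall j : 'I_l, j <= j0)
  (i0 : 'I_k) (hi0 : forall i : 'I_k, i <= i0)
  (hok : okF F) (hsat : forall x, x \notin F -> ~ okF (x |: F)) (r : 'I_l) :
  r != j0 -> exists2 y : T, y \in F :\: HiP F & y.2 = r :> nat.
Proof.
move=> rj.
have hrj : r < j0 by have := hj0 r; move: rj; rewrite -val_eqE /=; lia.
have [y yF yr] := rowA hi0 hok hsat r.
have Py : (y \in F) && (y.2 == r :> nat) by rewrite yF yr eqxx.
case: (@arg_maxnP _ y (fun z : T => (z \in F) && (z.2 == r :> nat)) (fun z : T => nat_of_ord z.1) Py) => w /andP[wF /eqP wr] wmax.
have hr : forall z : T, z \in F -> z.2 = r :> nat -> z.1 <= w.1.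
  by move=> z zF zr; apply: wmax; rewrite zF zr eqxx.
case: (boolP [exists v in F, (v.1 == w.1 :> nat) && (w.2 < v.2)]) => [/existsP [v /andP[vF /andP[/eqP e lt]]] | hno].
  by exists w => //; exact: NHP2 wF vF e lt.
have hcol : forall v : T, v \in F -> v.1 = w.1 :> nat -> v.2 <= r.
  move=> v vF e; rewrite leqNgt; apply/negP => lt; move/existsP: hno; apply; exists v.
  by rewrite vF e eqxx wr lt.
pose S := [set z in F | (w.1 < z.1) && (r < z.2)].
case: (set_0Vmem S) => [S0 | [z0 z0S]].
- pose x : T := (w.1, j0).
  have xF : x \notin F by apply/negP => /hcol /= h; have := h erefl; lia.
  apply: False_ind; apply: (hsat x xF); apply: add_ok => //.
  + move=> q s qF sF hq hs; apply: (hok w) => //; gl.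
  + move=> p s pF sF hp hs.
    have H1 := fun h => hok p w s pF wF sF h hs.
    have hS : w.1 < s.1 -> r < s.2 -> False.
      move=> h1 h2; have : s \in S by rewrite inE sF h1 h2.
      by rewrite S0 inE.
    move: (hcol p pF) (hcol s sF) (hr s sF) (hj0 s.2) => h1 h2 h3 h4.
    gl.
- case: (@arg_minnP _ z0 (fun z : T => z \in S) (fun z : T => nat_of_ord z.2) z0S) => zs.
  rewrite inE => /andP[zsF /andP[bzs rzs]] zmin.
  pose x : T := (w.1, zs.2).
  have xF : x \notin F by apply/negP => /hcol /(_ erefl) /= h; move: h rzs; rewrite /x /=; lia.
  apply: False_ind; apply: (hsat x xF); apply: add_ok => //.
  + move=> q s qF sF hq hs; apply: (hok w) => //; gl.
  + move=> p s pF sF hp hs.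
    have H1 := fun h => hok p w s pF wF sF h hs.
    have H2 := fun h => hok p zs s pF zsF sF h hs.
    have hS : w.1 < s.1 -> r < s.2 -> zs.2 <= s.2.
      by move=> h1 h2; apply: zmin; rewrite inE sF h1 h2.
    move: (hcol p pF) (hcol s sF) (hr s sF) (hj0 s.2) => h1 h2 h3 h4.
    gl.
Qed.

Lemma lb (F : {set T}) (j0 : 'I_l) (hj0 : forall j : 'I_l, j <= j0)
  (i0 : 'I_k) (hi0 : forall i : 'I_k, i <= i0)
  (hok : okF F) (hsat : forall x, x \notin F -> ~ okF (x |: F)) :
  k + l.-1 <= #|F|.
Proof.
rewrite -(cardsID (HiP F) F); apply: leq_add.
- rewrite -(card_in_imset (f := fst)).
    rewrite -{1}(card_ord k) -cardsT; apply: subset_leq_card; apply/subsetP => a _.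
    have [y yF ya] := colA hj0 hok hsat a.
    have Py : (y \in F) && (y.1 == a :> nat) by rewrite yF ya eqxx.
    case: (@arg_maxnP _ y (fun z : T => (z \in F) && (z.1 == a :> nat)) (fun z : T => nat_of_ord z.2) Py) => w /andP[wF /eqP wa] wmax.
    apply/imsetP; exists w; last by apply/val_inj.
    apply: HiE2 => // z zF e; apply: wmax; by rewrite zF e wa eqxx.
  move=> x y /HiE [xF hx] /HiE [yF hy] e.
  apply: pair_eq; first by rewrite e.
  have := hx y yF (esym (congr1 val e)). have := hy x xF (congr1 val e).
  by move=> h1 h2; apply/eqP; rewrite eqn_leq h1 h2.
- apply: leq_trans (leq_imset_card snd _).
  have -> : l.-1 = #|[set~ j0]| by rewrite cardsC1 card_ord.
  apply: subset_leq_card; apply/subsetP => r; rewrite !inE => rj.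
  have [y yN yr] := rowB hj0 hi0 hok hsat rj.
  apply/imsetP; exists y => //; by apply/val_inj.
Qed.
End G.

Lemma bigmin_le (I : eqType) (r : seq I) (P : pred I) (F : I -> nat) x i0 :
  i0 \in r -> P i0 -> \big[minn/x]_(i <- r | P i) F i <= F i0.
Proof.
elim: r => // a r IH; rewrite inE big_cons => /orP[/eqP ->|ir] Pi.
  by rewrite Pi geq_minl.
case: (P a); last exact: IH.
by apply: leq_trans (geq_minr _ _) (IH ir Pi).
Qed.

Theorem theorem1p9 (k l : nat) (hk : 1 <= k) (hl : 1 <= l) :
  sat_star vee2_le (@grid_le k l) = k + l - 1 /\
  La_star vee2_le (@grid_le k l) = k + l - 1.
Proof.
have hk' : k.-1 < k by lia.
have hl' : l.-1 < l by lia.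
pose i0 : 'I_k := Ordinal hk'. pose j0 : 'I_l := Ordinal hl'.
have hi0 : forall i : 'I_k, i <= i0 by move=> i /=; have := ltn_ord i; lia.
have hj0 : forall j : 'I_l, j <= j0 by move=> j /=; have := ltn_ord j; lia.
have key : forall F : {set 'I_k * 'I_l}, strong_saturated vee2_le (@grid_le k l) F -> #|F| = k + l - 1.
  move=> F /andP[hf /forallP hs].
  have hok := ok_of_free hf.
  have hsat : forall x, x \notin F -> ~ okF (x |: F).
    move=> x xF h; have := hs x; rewrite xF /= => hsub.
    by have := free_of_ok h; rewrite /strong_free hsub.
  have := ub hj0 hok; have := lb hj0 hi0 hok hsat; lia.
have hne : 0 < #|[pred F : {set 'I_k * 'I_l} | strong_free vee2_le (@grid_le k l) F]|.
  apply/card_gt0P; exists set0; rewrite inE; apply: free_of_ok => a b c; by rewrite inE.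
case: (eq_bigmax_cond (fun F : {set 'I_k * 'I_l} => #|F|) hne) => F0 F0free F0max.
have F0sat : strong_saturated vee2_le (@grid_le k l) F0.
  rewrite /strong_saturated; rewrite inE in F0free; rewrite F0free /=.
  apply/forallP => x; apply/implyP => xF.
  case hx: (strong_sub _ _ _) => //.
  have : strong_free vee2_le (@grid_le k l) (x |: F0) by rewrite /strong_free hx.
  move=> hfr.
  have := @leq_bigmax_cond _ (fun F => F \in [pred F : {set 'I_k * 'I_l} | strong_free vee2_le (@grid_le k l) F]) (fun F => #|F|) (x |: F0).
  rewrite inE hfr => /(_ isT).
  rewrite F0max cardsU1 xF /=; lia.
have F0card := key F0 F0sat.
split.
- rewrite /sat_star; apply/eqP; rewrite eqn_leq; apply/andP; split.
    by rewrite -F0card; apply: bigmin_le => //; exact: mem_index_enum.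
  apply: (big_ind (fun m => k + l - 1 <= m)).
  + by rewrite -F0card max_card.
  + by move=> x y h1 h2; rewrite leq_min h1 h2.
  + by move=> F hF; rewrite (key F hF).
- by rewrite /La_star F0max.
Qed.
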